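(* Let $1\le k\le s<r$, $G=\mathrm{Sp}(2r)$, $M=C_G(\tau)\cong\mathrm{Sp}(2s)\times\mathrm{Sp}(2(r-s))$, $P\supseteq B$ the maximal parabolic of $G$ with $G/P\cong\mathrm{IG}(k,2r)$, and $Q=M\cap P$ (so $M/Q\cong\mathrm{IG}(k,2s)$). Then the inclusion $W_M\subseteq W$ induces an inclusion $W_M^Q\subseteq W^P$.
   Context: $V=\mathbb{C}^{2r}$ with ordered basis $e_1,\ldots,e_r,e_r',\ldots,e_1'$ and symplectic form with $(e_i,e_j')=\delta_{ij}$, $(e_i,e_j)=(e_i',e_j')=0$; $G=\mathrm{Sp}(V)$, $T$ the diagonal torus $\mathrm{diag}(a_1,\ldots,a_r,a_r^{-1},\ldots,a_1^{-1})$, $\epsilon_i$ the character giving $a_i$; $B$ the Borel with positive roots $\epsilon_i-\epsilon_j$ ($i<j$), $\epsilon_i+\epsilon_j$ ($i\le j$), simple roots $\alpha_i=\epsilon_i-\epsilon_{i+1}$ ($i<r$), $\alpha_r=2\epsilon_r$. $P$ is the maximal parabolic associated to omitting $\alpha_k$. $\tau=\mathrm{diag}(-1,\ldots,-1,1,\ldots,1,-1,\ldots,-1)\in T$ with $2(r-s)$ entries equal to $1$, $M=C_G(\tau)$, whose roots are the roots $\alpha$ of $G$ with $\alpha(\tau)=1$; its simple roots are $\alpha_1,\ldots,\alpha_{s-1},2\alpha_s+\cdots+2\alpha_{r-1}+\alpha_r$ (first factor) and $\alpha_{s+1},\ldots,\alpha_r$ (second factor). $W^P$ (resp. $W_M^Q$)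 denotes the set of minimal length representatives of $W/W_P$ (resp. $W_M/W_Q$), length in $W_M$ measured with respect to the simple reflections of $M$. *)

(* Defs.v *)
From HB Require Import structures.
From mathcomp Require Import all_boot all_order all_algebra all_fingroup.
Set Implicit Arguments. Unset Strict Implicit. Unset Printing Implicit Defensive.
Import Order.TTheory GRing.Theory Num.Theory.
Local Open Scope ring_scope.

(* Basis of V = C^{2r}: (i, false) stands for e_{i+1}, (i, true) for e'_{i+1}
   (0-indexed i : 'I_r). *)
Definition idx (r : nat) := ('I_r * bool)%type.

(* Characters of T, i.e. X(T) = Z^r : lambda = sum_i lambda_i eps_i. *)
Definition weight (r : nat) := {ffun 'I_r -> int}.

Definition eps (r : nat) (i : nat) : weight r := [ffun j : 'I_r => ((j : nat) == i)%:Z].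

Definition wt (r : nat) (x : idx r) : weight r :=
  if x.2 then - eps r x.1 else eps r x.1.

Definition flip (r : nat) (x : idx r) : idx r := (x.1, ~~ x.2).

(* W = N_G(T)/T, realised as its faithful action on the weight lines of V:
   the permutations of the basis lines preserving the pairing e_i <-> e'_i. *)
Definition Weyl (r : nat) : {set {perm idx r}} :=
  [set w : {perm idx r} | [forall x, w (flip x) == flip (w x)]].

Definition dotw (r : nat) (l m : weight r) : int := \sum_(i < r) l i * m i.

Definition sref (r : nat) (a l : weight r) : weight r :=
  l - a *~ divz (2 * dotw l a) (dotw a a).

Definition reflset (r : nat) (a : weight r) : {set {perm idx r}} :=
  [set w in Weyl r | [forall x, wt (w x) == sref a (wt x)]].

(* Roots of G: +-eps_i +- eps_j (i <> j) and +-2 eps_i, parametrised by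
   (i, j, sign_i, sign_j). *)
Definition rootOf (r : nat) (p : 'I_r * 'I_r * bool * bool) : weight r :=
  (if p.1.2 then - eps r p.1.1.1 else eps r p.1.1.1)
  + (if p.2 then - eps r p.1.1.2 else eps r p.1.1.2).
Definition rootParam (r : nat) (p : 'I_r * 'I_r * bool * bool) : bool :=
  (p.1.1.1 == p.1.1.2) ==> (p.1.2 == p.2).

Definition alpha (r : nat) (i : nat) : weight r :=
  if (i.+1 < r)%N then eps r i - eps r i.+1 else eps r i *+ 2.

Definition Ssimple (r : nat) : {set {perm idx r}} :=
  \bigcup_(i < r) reflset (alpha r i).

(* W_P, P the maximal parabolic omitting alpha_k (1-indexed k) *)
Definition WP (r k : nat) : {set {perm idx r}} :=
  <<\bigcup_(i < r | (i.+1 != k)%N) reflset (alpha r i)>>%g.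

(* tau = diag(-1 (s times), 1 (2(r-s) times), -1 (s times)); its value on
   the character lambda is prod_i tau_i^{lambda_i}, tau_i = -1 for i<s, 1 else *)
Definition tau (r s : nat) (i : 'I_r) : int := if (i < s)%N then -1 else 1.
Definition chartau (r s : nat) (l : weight r) : int :=
  \prod_(i < r) (tau s i) ^ (l i).

Definition WM (r s : nat) : {set {perm idx r}} :=
  <<\bigcup_(p : 'I_r * 'I_r * bool * bool | rootParam p && (chartau s (rootOf p) == 1%R)) reflset (rootOf p)>>%g.

Definition msimple (r s : nat) : seq (weight r) :=
  [seq alpha r i | i <- iota 0 s.-1]
  ++ [:: (\sum_(s.-1 <= i < r.-1) alpha r i) *+ 2 + alpha r r.-1]
  ++ [seq alpha r i | i <- iota s (r - s)].

Definition SM (r s : nat) : {set {perm idx r}} :=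
  \bigcup_(b <- msimple r s) reflset b.

Definition WQ (r s k : nat) : {set {perm idx r}} := WM r s :&: WP r k.

Definition word_of (gT : finGroupType) (S : {set gT}) (w : gT) (n : nat) : Prop :=
  exists t : seq gT, [/\ all (mem S) t, size t = n & (\prod_(x <- t) x)%g = w].

Definition minrep (gT : finGroupType) (S H : {set gT}) (w : gT) : Prop :=
  forall v, v \in (w *: H)%g -> forall n, word_of S v n ->
    exists2 m, (m <= n)%N & word_of S w m.

Definition in_WP_min (r k : nat) (w : {perm idx r}) : Prop :=
  w \in Weyl r /\ minrep (Ssimple r) (WP r k) w.

Definition in_WMQ_min (r s k : nat) (w : {perm idx r}) : Prop :=
  w \in WM r s /\ minrep (SM r s) (WQ r s k) w.

(* Main.v *)
Require Import Defs.
From mathcomp Require Import all_boot all_order all_algebra all_fingroup.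
From mathcomp Require Import zify.
Set Implicit Arguments. Unset Strict Implicit. Unset Printing Implicit Defensive.
Import Order.TTheory GRing.Theory Num.Theory.
Local Open Scope ring_scope.

Lemma blk (r p q : nat) (F : nat -> int) : (p < q)%N -> (q <= r)%N ->
  (forall n, (p <= n < q)%N -> exists j, (p <= j < q)%N /\ (F n = (r - j)%N%:Z \/ F n = - (r - j)%N%:Z)) ->
  (forall i, (p <= i)%N -> (i.+1 < q)%N -> F i.+1 < F i) -> 0 < F q.-1 ->
  forall n, (p <= n < q)%N -> F n = (r - n)%N%:Z.
Proof.
move=> pq qr bd dec pos.
have down : forall d, (d < q - p)%N -> (r - (q.-1 - d))%N%:Z <= F (q.-1 - d)%N.
  elim=> [|d IH] hd.
    rewrite subn0; have [j [hj [e|e]]] := bd q.-1 ltac:(lia); lia.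
  have E : (q.-1 - d.+1).+1 = (q.-1 - d)%N by lia.
  have := dec (q.-1 - d.+1)%N ltac:(lia) ltac:(lia); rewrite E.
  have := IH ltac:(lia); lia.
have up : forall d, (p + d < q)%N -> F (p + d)%N <= (r - (p + d))%N%:Z.
  elim=> [|d IH] hd.
    rewrite addn0; have [j [hj [e|e]]] := bd p ltac:(lia); lia.
  have := dec (p + d)%N ltac:(lia) ltac:(lia); rewrite -addnS.
  have := IH ltac:(lia); lia.
move=> n hn.
have h1 := down (q.-1 - n)%N ltac:(lia).
have h2 := up (n - p)%N ltac:(lia).
have E1 : (q.-1 - (q.-1 - n))%N = n by lia.
have E2 : (p + (n - p))%N = n by lia.
rewrite E1 in h1; rewrite E2 in h2; lia.
Qed.

Lemma chain (r s' : nat) (F : nat -> int) : (s' <= r)%N ->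
  (forall n, (n < r)%N -> exists j, [/\ (j < r)%N, (j < s')%N = (n < s')%N &
       (F n = (r - j)%N%:Z \/ F n = - (r - j)%N%:Z)]) ->
  (forall i, (i.+1 < r)%N -> (i < s')%N = (i.+1 < s')%N -> F i.+1 < F i) ->
  ((0 < s')%N -> 0 < F s'.-1) -> ((0 < r)%N -> 0 < F r.-1) ->
  forall n, (n < r)%N -> F n = (r - n)%N%:Z.
Proof.
move=> sr bd dec p1 p2 n hn.
case: (ltnP n s') => hns.
  have bd' : forall m, (0 <= m < s')%N -> exists j, (0 <= j < s')%N /\ (F m = (r - j)%N%:Z \/ F m = - (r - j)%N%:Z).
    move=> m hm; have [j [hj e1 e2]] := bd m ltac:(lia); exists j; split => //.
    have : (m < s')%N by lia. rewrite -e1; lia.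
  have dec' : forall i, (0 <= i)%N -> (i.+1 < s')%N -> F i.+1 < F i.
    by move=> i _ hi; apply: dec; lia.
  exact: (@blk r 0 s' F ltac:(lia) sr bd' dec' (p1 ltac:(lia)) n ltac:(lia)).
have bd' : forall m, (s' <= m < r)%N -> exists j, (s' <= j < r)%N /\ (F m = (r - j)%N%:Z \/ F m = - (r - j)%N%:Z).
  move=> m hm; have [j [hj e1 e2]] := bd m ltac:(lia); exists j; split => //.
  have : (m < s')%N = false by lia. rewrite -e1; lia.
have dec' : forall i, (s' <= i)%N -> (i.+1 < r)%N -> F i.+1 < F i.
  by move=> i hi1 hi; apply: dec; lia.
exact: (@blk r s' r F ltac:(lia) (leqnn r) bd' dec' (p2 ltac:(lia)) n ltac:(lia)).
Qed.

Section Basics.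
Variable r : nat.
Implicit Types x y : idx r.

Definition hv x : int := if x.2 then - (r - x.1)%N%:Z else (r - x.1)%N%:Z.

Lemma flipK : involutive (@flip r).
Proof. by case=> i b; rewrite /flip /= negbK. Qed.

Lemma hv_flip x : hv (flip x) = - hv x.
Proof. by case: x => i [] ; rewrite /hv /flip /= ?opprK. Qed.

Lemma hv_inj : injective hv.
Proof.
move=> [i b] [j c]; rewrite /hv /=; have hi := ltn_ord i; have hj := ltn_ord j.
case: b; case: c => /= H; try lia; (have E : (i : nat) = j by lia);
by rewrite (val_inj E).
Qed.

Lemma hv_sum0 x y : hv x + hv y = 0 -> y = flip x.
Proof. by move=> H; apply: hv_inj; rewrite hv_flip; lia. Qed.

Lemma hv_neq0 x : hv x != 0.
Proof. case: x => i b; have hi := ltn_ord i; rewrite /hv; case: b => /=; lia. Qed.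

Definition swf (I J : 'I_r) x : idx r :=
  (if x.1 == I then J else if x.1 == J then I else x.1, x.2).
Lemma swfK I J : involutive (swf I J).
Proof.
case=> X b; rewrite /swf /=; congr pair;
repeat match goal with |- context[?a == ?b] => is_var a; is_var b; case: (@eqP _ a b) => ? end; congruence.
Qed.
Definition swP I J : {perm idx r} := perm (can_inj (swfK I J)).
Lemma swPE I J x : swP I J x = swf I J x.
Proof. by rewrite permE. Qed.

Definition flf (J : 'I_r) x : idx r := if x.1 == J then flip x else x.
Lemma flfK J : involutive (flf J).
Proof. case=> X b; rewrite /flf /flip /=; case: (eqVneq X J) => [->|h] /=; by rewrite ?eqxx ?negbK ?(negbTE h). Qed.
Definition flP J : {perm idx r} := perm (can_inj (flfK J)).
Lemma flPE J x : flP J x = flf J x.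
Proof. by rewrite permE. Qed.

Lemma sw_sign (I J : 'I_r) X b Y c : (J : nat) = (I : nat).+1 ->
  ~~ [&& X == I, b == false, Y == J & c == true] ->
  ~~ [&& X == J, b == true, Y == I & c == false] ->
  ~~ [&& X == I, b == true, Y == J & c == false] ->
  ~~ [&& X == J, b == false, Y == I & c == true] ->
  (hv (swf I J (X, b)) + hv (swf I J (Y, c)) < 0) = (hv (X, b) + hv (Y, c) < 0).
Proof.
move=> hJ; rewrite /swf /hv /= -!val_eqE /=.
have := ltn_ord X; have := ltn_ord Y; have := ltn_ord I; have := ltn_ord J.
case: b; case: c => /=;
repeat match goal with |- context[(nat_of_ord ?a == nat_of_ord ?b)] => case: (@eqP nat a b) => ? end;
simpl; move=> *; apply/idP/idP; lia.
Qed.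


Lemma sw_sign' (I J : 'I_r) x' y' : (J : nat) = (I : nat).+1 ->
  ~~ ((x' == (I,false)) && (y' == (J,true))) ->
  ~~ ((x' == (J,true)) && (y' == (I,false))) ->
  ~~ ((x' == (I,true)) && (y' == (J,false))) ->
  ~~ ((x' == (J,false)) && (y' == (I,true))) ->
  (hv (swf I J x') + hv (swf I J y') < 0) = (hv x' + hv y' < 0).
Proof.
case: x' => X b; case: y' => Y c; rewrite !xpair_eqE => h1.
case: b; case: c => h2 h3 h4 h5; apply: sw_sign => //=; move: h2 h3 h4 h5;
rewrite /= ?andbT ?andbF ?andTb ?andFb //.
Qed.

Lemma fl_sign (J : 'I_r) x' y' :
  (x'.1 == J -> (y'.1 == J) || (y'.1 < J)%N) ->
  (y'.1 == J -> (x'.1 == J) || (x'.1 < J)%N) ->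
  ~~ [&& x'.1 == J, y'.1 == J & x'.2 == y'.2] ->
  (hv (flf J x') + hv (flf J y') < 0) = (hv x' + hv y' < 0).
Proof.
case: x' => X b; case: y' => Y c; rewrite /flf /flip /hv /= -!val_eqE /=.
have := ltn_ord X; have := ltn_ord Y; have := ltn_ord J.
case: b; case: c => /=;
repeat match goal with |- context[(nat_of_ord ?a == nat_of_ord ?b)] => case: (@eqP nat a b) => ? end;
simpl; move=> *; apply/idP/idP; lia.
Qed.

Definition GrpS s' : {set {perm idx r}} :=
  [set w : {perm idx r} | [forall x, w (flip x) == flip (w x)] && [forall x, ((w x).1 < s')%N == (x.1 < s')%N]].

Lemma GrpSP s' (w : {perm idx r}) : reflect ((forall x, w (flip x) = flip (w x)) /\ (forall x, ((w x).1 < s')%N = (x.1 < s')%N)) (w \in GrpS s').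
Proof.
rewrite inE; apply: (iffP andP) => [[H1 H2]|[H1 H2]].
  by split => x; [move/forallP: H1 => /(_ x) /eqP | move/forallP: H2 => /(_ x) /eqP].
by split; apply/forallP => x; apply/eqP.
Qed.

Lemma GrpS_group_set s' : group_set (GrpS s').
Proof.
apply/group_setP; split; first by apply/GrpSP; split => x; rewrite !perm1.
move=> u v /GrpSP[u1 u2] /GrpSP[v1 v2]; apply/GrpSP; split => x; rewrite !permM.
  by rewrite u1 v1.
by rewrite v2 u2.
Qed.
Canonical GrpS_group s' := Group (GrpS_group_set s').

Lemma GrpS_flip s' (w : {perm idx r}) x : w \in GrpS s' -> w (flip x) = flip (w x).
Proof. by case/GrpSP => H _; apply: H. Qed.
Lemma GrpS_blk s' (w : {perm idx r}) x : w \in GrpS s' -> ((w x).1 < s')%N = (x.1 < s')%N.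
Proof. by case/GrpSP => _ H; apply: H. Qed.
Lemma GrpS_V s' (w : {perm idx r}) : w \in GrpS s' -> (w^-1)%g \in GrpS s'.
Proof. by move=> H; rewrite (groupV (GrpS_group s')). Qed.

Definition Dw s' (w : {perm idx r}) : nat :=
  #|[set p : idx r * idx r | [&& ((p.1).1 < s')%N == ((p.2).1 < s')%N,
        0 < hv p.1 + hv p.2 & hv (w p.1) + hv (w p.2) < 0]]|
  + #|[set x : idx r | (0 < hv x) && (hv (w x) < 0)]|.

Lemma Dw1 s' : Dw s' 1%g = 0%N.
Proof.
rewrite /Dw; apply/eqP; rewrite addn_eq0 !cards_eq0; apply/andP; split; apply/eqP/setP.
  by case=> x y; rewrite !inE !perm1 /=; apply/negbTE; apply/negP => /and3P[_ h1 h2]; lia.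
by move=> x; rewrite !inE !perm1 /=; apply/negbTE; apply/negP => /andP[h1 h2]; lia.
Qed.


Lemma hv_neg x : (hv x < 0) = x.2.
Proof. case: x => X b; rewrite /hv; have := ltn_ord X; case: b => /= h; apply/idP/idP; lia. Qed.
Lemma hv_pos x : (0 < hv x) = ~~ x.2.
Proof. case: x => X b; rewrite /hv; have := ltn_ord X; case: b => /= h; apply/idP/idP; lia. Qed.

Lemma Dshort s' (w : {perm idx r}) (I J : 'I_r) : (J:nat) = (I:nat).+1 ->
  ((I < s') = (J < s'))%N -> w \in GrpS s' ->
  hv ((w^-1)%g (I,false)) + hv ((w^-1)%g (J,true)) < 0 ->
  Dw s' w = (Dw s' (w * swP I J)%g).+2.
Proof.
move=> hJ hb wG.
set p := (w^-1)%g (I,false); set q := (w^-1)%g (J,true) => hneg.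
have wp : w p = (I,false) by rewrite /p permKV.
have wq : w q = (J,true) by rewrite /q permKV.
have wfp : w (flip p) = (I,true) by rewrite (GrpS_flip p wG) wp.
have wfq : w (flip q) = (J,false) by rewrite (GrpS_flip q wG) wq.
have IJ : I != J by apply/eqP => E; move: hJ; rewrite E; lia.
have sIJ : swf I J (I,true) = (J,true) by rewrite /swf /= eqxx.
have sJI : swf I J (J,false) = (I,false) by rewrite /swf /= eq_sym (negbTE IJ) eqxx.
have sIJ' : swf I J (I,false) = (J,false) by rewrite /swf /= eqxx.
have sJI' : swf I J (J,true) = (I,true) by rewrite /swf /= eq_sym (negbTE IJ) eqxx.
have hIJ : hv (I,true) + hv (J,false) < 0.
  rewrite /hv /=; have := ltn_ord J; lia.
have hJI : 0 < hv (J,true) + hv (I,false).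
  rewrite /hv /=; have := ltn_ord J; lia.
have pq : p != q by apply/eqP => E; move: wq; rewrite -E wp.
have fpq : flip p != flip q by apply/eqP => /(congr1 (@flip r)); rewrite !flipK; apply/eqP.
have bpq : forall x y, w x = (I,false) -> w y = (J,true) -> (x.1 < s')%N = (y.1 < s')%N.
  by move=> x y ex ey; rewrite -(GrpS_blk x wG) -(GrpS_blk y wG) ex ey.
have bpq' : forall x y, w x = (I,true) -> w y = (J,false) -> (x.1 < s')%N = (y.1 < s')%N.
  by move=> x y ex ey; rewrite -(GrpS_blk x wG) -(GrpS_blk y wG) ex ey.
rewrite /Dw.
have Hdiag : [set x | (0 < hv x) && (hv (w x) < 0)] =
             [set x | (0 < hv x) && (hv ((w * swP I J)%g x) < 0)].
  by apply/setP => x; rewrite !inE permM swPE !hv_neg.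
set Aw := [set pr : idx r * idx r | _].
set Ac := [set pr : idx r * idx r | _].
have Hpair : Aw = (flip p, flip q) |: ((flip q, flip p) |: Ac).
  apply/setP => [[x y]]; rewrite !inE /= !permM !swPE.
  case: (eqVneq (x,y) (flip p, flip q)) => [[-> ->] | n1].
    rewrite orTb; apply/and3P; split; [by rewrite (bpq' _ _ wfp wfq) | rewrite !hv_flip; lia | by rewrite wfp wfq].
  case: (eqVneq (x,y) (flip q, flip p)) => [[-> ->] | n2].
    rewrite orbT; apply/and3P; split; [by rewrite (bpq' _ _ wfp wfq) | rewrite !hv_flip; lia | by rewrite wfp wfq addrC].
  rewrite /=; case pos: (0 < hv x + hv y); last by rewrite !andbF.
  rewrite sw_sign' //; apply/negP => /andP[/eqP e1 /eqP e2].
  - have ex : x = p by apply: (@perm_inj _ w); rewrite e1 wp.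
    have ey : y = q by apply: (@perm_inj _ w); rewrite e2 wq.
    by move: pos; rewrite ex ey; lia.
  - have ex : x = q by apply: (@perm_inj _ w); rewrite e1 wq.
    have ey : y = p by apply: (@perm_inj _ w); rewrite e2 wp.
    by move: pos; rewrite ex ey; lia.
  - have ex : x = flip p by apply: (@perm_inj _ w); rewrite e1 wfp.
    have ey : y = flip q by apply: (@perm_inj _ w); rewrite e2 wfq.
    by move: n1; rewrite ex ey eqxx.
  - have ex : x = flip q by apply: (@perm_inj _ w); rewrite e1 wfq.
    have ey : y = flip p by apply: (@perm_inj _ w); rewrite e2 wfp.
    by move: n2; rewrite ex ey eqxx.
rewrite Hpair -Hdiag !cardsU1.
have n1 : (flip p, flip q) \notin ((flip q, flip p) |: Ac).
  rewrite !inE /= !permM !swPE wfp wfq sIJ sJI xpair_eqE (negbTE fpq) /=.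
  have hJI' : (hv (J,true) + hv (I,false) < 0) = false by rewrite ltNge (ltW hJI).
  by rewrite hJI' /= !andbF.
have n2 : (flip q, flip p) \notin Ac.
  rewrite !inE /= !permM !swPE wfp wfq sIJ sJI (addrC (hv (I,false))).
  have hJI' : (hv (J,true) + hv (I,false) < 0) = false by rewrite ltNge (ltW hJI).
  by rewrite hJI' /= !andbF.
by rewrite n1 n2 /= !add1n !addSn.
Qed.


Lemma Dlong s' (w : {perm idx r}) (J : 'I_r) :
  (forall y : 'I_r, ((y < s') = (J < s'))%N -> y != J -> (y < J)%N) ->
  w \in GrpS s' -> hv ((w^-1)%g (J,false)) < 0 ->
  Dw s' w = (Dw s' (w * flP J)%g).+2.
Proof.
move=> last wG; set p := (w^-1)%g (J,false) => hneg.
have wp : w p = (J,false) by rewrite /p permKV.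
have wfp : w (flip p) = (J,true) by rewrite (GrpS_flip p wG) wp.
have flJ : flf J (J,true) = (J,false) by rewrite /flf /= eqxx.
have hJJ : (hv (J,false) + hv (J,false) < 0) = false.
  by apply/negP; rewrite /hv /=; have := ltn_ord J; lia.
have hJJ' : hv (J,true) + hv (J,true) < 0 by rewrite /hv /=; have := ltn_ord J; lia.
rewrite /Dw.
set Aw := [set pr : idx r * idx r | _].
set Ac := [set pr : idx r * idx r | _].
set Gw := [set x : idx r | _].
set Gc := [set x : idx r | _].
have Hpair : Aw = (flip p, flip p) |: Ac.
  apply/setP => [[x y]]; rewrite !inE /= !permM !flPE.
  case: (eqVneq (x,y) (flip p, flip p)) => [[-> ->]|n1].
    by rewrite orTb; apply/and3P; split => //; [rewrite hv_flip; lia | rewrite wfp].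
  rewrite /=; case pos: (0 < hv x + hv y); last by rewrite !andbF.
  case sb: ((x.1 < s')%N == (y.1 < s')%N) => //=.
  have bl : ((w x).1 < s')%N = ((w y).1 < s')%N.
    by rewrite (GrpS_blk x wG) (GrpS_blk y wG); move/eqP: sb.
  rewrite fl_sign //.
  - move=> /eqP ex; case: (eqVneq (w y).1 J) => //= ne; apply: last => //.
    by rewrite -ex bl.
  - move=> /eqP ey; case: (eqVneq (w x).1 J) => //= ne; apply: last => //.
    by rewrite -ey bl.
  - apply/negP => /and3P[/eqP e1 /eqP e2 /eqP e3].
    have xy : x = y.
      apply: (@perm_inj _ w); move: e1 e2 e3.
      by case: (w x) => a b; case: (w y) => c d /= -> -> ->.
    subst y.
    have e : w x = (J, (w x).2) by move: e1; case: (w x) => a b /= ->.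
    move: e; case: ((w x).2) => e.
    + have ex : x = flip p by apply: (@perm_inj _ w); rewrite wfp e.
      by move: n1; rewrite ex eqxx.
    + have ex : x = p by apply: (@perm_inj _ w); rewrite wp e.
      by move: pos; rewrite ex; lia.
have Hdiag : Gw = flip p |: Gc.
  apply/setP => x; rewrite !inE permM flPE.
  case: (eqVneq x (flip p)) => [->|n1].
    by rewrite orTb hv_flip wfp; apply/andP; split; [lia | rewrite hv_neg].
  rewrite /=; case: (eqVneq (w x).1 J) => ej; last by rewrite /flf (negbTE ej).
  have e : w x = (J, (w x).2) by rewrite [w x]surjective_pairing ej.
  move: e; case: ((w x).2) => e.
    have ex : x = flip p by apply: (@perm_inj _ w); rewrite wfp e.
    by move: n1; rewrite ex eqxx.
  have ex : x = p by apply: (@perm_inj _ w); rewrite wp e.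
  by rewrite ex; have -> : (0 < hv p) = false by apply/negP; lia.
have n1 : (flip p, flip p) \notin Ac by rewrite !inE /= !permM !flPE wfp flJ hJJ !andbF.
have n2 : flip p \notin Gc by rewrite !inE /= !permM !flPE wfp flJ hv_neg andbF.
by rewrite Hpair Hdiag !cardsU1 n1 n2 /= !add1n !addSn addnS.
Qed.


Definition lastb s' (J : 'I_r) :=
  forall y : 'I_r, ((y < s') = (J < s'))%N -> y != J -> (y < J)%N.

Definition simp s' (c : {perm idx r}) : Prop :=
  (exists I J : 'I_r, [/\ (J:nat) = (I:nat).+1, ((I < s') = (J < s'))%N & c = swP I J]) \/
  (exists J : 'I_r, lastb s' J /\ c = flP J).

Lemma simp_grp s' c : simp s' c -> c \in GrpS s'.
Proof.
case=> [[I [J [hJ hb ->]]]|[J [_ ->]]]; apply/GrpSP; split => x; rewrite !permE.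
- by rewrite /swf /flip.
- rewrite /swf /=; case: (eqVneq x.1 I) => [->|h1]; first by rewrite hb.
  by case: (eqVneq x.1 J) => [->|h2] //; rewrite hb.
- rewrite /flf /flip /=; case: (eqVneq x.1 J) => //=; by rewrite negbK.
- by rewrite /flf; case: (eqVneq x.1 J).
Qed.

Lemma simp_inv s' c : simp s' c -> (c * c = 1)%g.
Proof.
case=> [[I [J [hJ hb ->]]]|[J [_ ->]]]; apply/permP => x; rewrite permM perm1 !permE.
  by rewrite swfK.
by rewrite flfK.
Qed.

Lemma Dstep s' (w c : {perm idx r}) : w \in GrpS s' -> simp s' c ->
  (Dw s' w = (Dw s' (w*c)%g).+2) \/ (Dw s' (w*c)%g = (Dw s' w).+2).
Proof.
move=> wG sc; have cc := simp_inv sc; have cG := simp_grp sc.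
have w'G : (w * c)%g \in GrpS s' by rewrite (groupM (G:=GrpS_group s')).
have ew : ((w * c) * c)%g = w by rewrite -mulgA cc mulg1.
have ci : forall z, (c^-1)%g (c z) = z := permK c.
have wi : forall z, ((w * c)^-1)%g z = (w^-1)%g ((c^-1)%g z) by move=> z; rewrite invMg permM.
have wiG := GrpS_V wG.
case: sc cc cG w'G ew ci wi => [[I [J [hJ hb ec]]]|[J [hl ec]]] cc cG w'G ew ci wi.
- have IJ : I != J by apply/eqP => E; move: hJ; rewrite E; lia.
  have S0 : hv ((w^-1)%g (I,false)) + hv ((w^-1)%g (J,true)) != 0.
    apply/eqP => /hv_sum0; rewrite -(GrpS_flip _ wiG) /flip /= => /(@perm_inj _ _) [E].
    by move: IJ; rewrite E eqxx.
  case: (ltP (hv ((w^-1)%g (I,false)) + hv ((w^-1)%g (J,true))) 0) => hS.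
    by left; rewrite ec; apply: Dshort; rewrite -?ec.
  right; rewrite -{2}ew; rewrite ec in ew w'G wi ci *.
  apply: Dshort => //.
  have s1 : swP I J (J,false) = (I,false) by rewrite permE /swf /= eq_sym (negbTE IJ) eqxx.
  have s2 : swP I J (I,true) = (J,true) by rewrite permE /swf /= eqxx.
  have e1 : ((swP I J)^-1)%g (I,false) = (J,false) by rewrite -s1 ci.
  have e2 : ((swP I J)^-1)%g (J,true) = (I,true) by rewrite -s2 ci.
  rewrite !wi e1 e2.
  have -> : ((J,false) : idx r) = flip (J,true) by [].
  have -> : ((I,true) : idx r) = flip (I,false) by [].
  rewrite !(GrpS_flip _ wiG) !hv_flip.
  move: S0 hS; set a := hv _; set b := hv _; lia.
- have S0 := hv_neq0 ((w^-1)%g (J,false)).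
  case: (ltP (hv ((w^-1)%g (J,false))) 0) => hS.
    by left; rewrite ec; apply: Dlong; rewrite -?ec.
  right; rewrite -{2}ew; rewrite ec in ew w'G wi ci *.
  apply: Dlong => //.
  have s1 : flP J (J,true) = (J,false) by rewrite permE /flf /= eqxx.
  have e1 : ((flP J)^-1)%g (J,false) = (J,true) by rewrite -s1 ci.
  rewrite !wi e1.
  have -> : ((J,true) : idx r) = flip (J,false) by [].
  rewrite !(GrpS_flip _ wiG) !hv_flip.
  move: S0 hS; set a := hv _; lia.
Qed.


Lemma Dstep_le s' (w c : {perm idx r}) : w \in GrpS s' -> simp s' c ->
  (Dw s' (w*c)%g <= (Dw s' w).+2)%N.
Proof. by move=> wG sc; case: (Dstep wG sc) => h; lia. Qed.

Lemma F1 s' (S : {set {perm idx r}}) : (forall c, c \in S -> simp s' c) ->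
  forall t : seq {perm idx r}, all (mem S) t ->
  (\prod_(x <- t) x)%g \in GrpS s' /\ (Dw s' (\prod_(x <- t) x)%g <= 2 * size t)%N.
Proof.
move=> HS; elim/last_ind => [|t c IH]; first by rewrite big_nil Dw1 group1.
rewrite all_rcons => /andP[cS /IH[tG tD]].
have sc := HS c cS.
have E : (\prod_(x <- rcons t c) x)%g = ((\prod_(x <- t) x) * c)%g by rewrite -cats1 big_cat big_seq1.
rewrite E size_rcons.
split; first by rewrite (groupM (G:=GrpS_group s')) // simp_grp.
apply: leq_trans (Dstep_le tG sc) _.
by rewrite mulnS add2n !ltnS.
Qed.

Lemma F2 s' (S : {set {perm idx r}}) : (forall c, simp s' c -> c \in S) ->
  (forall w, w \in GrpS s' -> w != 1%g -> exists c, simp s' c /\ Dw s' w = (Dw s' (w * c)%g).+2) ->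
  forall n w, (Dw s' w <= n)%N -> w \in GrpS s' -> exists m, Dw s' w = (2 * m)%N /\ word_of S w m.
Proof.
move=> HS Hd; elim=> [|n IH] w hn wG.
  case: (eqVneq w 1%g) => [->|nw].
    by exists 0%N; rewrite Dw1; split => //; exists [::]; rewrite big_nil.
  by case: (Hd w wG nw) => c [_ e]; move: hn; rewrite e.
case: (eqVneq w 1%g) => [->|nw].
  by exists 0%N; rewrite Dw1; split => //; exists [::]; rewrite big_nil.
case: (Hd w wG nw) => c [sc e].
have w'G : (w * c)%g \in GrpS s' by rewrite (groupM (G:=GrpS_group s')) // simp_grp.
have [m [em [t [tS st pt]]]] : exists m, Dw s' (w * c)%g = (2 * m)%N /\ word_of S (w * c)%g m.
  by apply: IH => //; move: hn; rewrite e ltnS => /ltnW.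
exists m.+1; split; first by rewrite e em; lia.
exists (rcons t c); split.
- by rewrite all_rcons tS andbT; apply: HS.
- by rewrite size_rcons st.
- have E : (\prod_(x <- rcons t c) x)%g = ((\prod_(x <- t) x) * c)%g by rewrite -cats1 big_cat big_seq1.
  by rewrite E pt -mulgA (simp_inv sc) mulg1.
Qed.


Definition Fn (w : {perm idx r}) (n : nat) : int :=
  if insub n is Some i then hv ((w^-1)%g (i,false)) else 0.
Lemma Fn_ord w (i : 'I_r) : Fn w i = hv ((w^-1)%g (i,false)).
Proof. by rewrite /Fn valK. Qed.

Lemma descent s' (w : {perm idx r}) : (s' <= r)%N -> w \in GrpS s' -> w != 1%g ->
  exists c, simp s' c /\ Dw s' w = (Dw s' (w*c)%g).+2.
Proof.
move=> sr wG nw; have wiG := GrpS_V wG.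
case: (posnP r) => [r0|r0].
  by move/eqP: nw; case; apply/permP => [[i b]]; have := ltn_ord i; lia.
case: (boolP [exists i : 'I_r, (i.+1 < r)%N && ((i < s')%N == (i.+1 < s')%N) && (Fn w i < Fn w i.+1)]).
  case/existsP => i /andP[/andP[hi hb] hlt]; set J := Ordinal hi.
  exists (swP i J); split; first by left; exists i, J; split => //; exact: (eqP hb).
  apply: (@Dshort s' w i J) => //; first exact: (eqP hb).
  have e2 : Fn w i.+1 = hv ((w^-1)%g (J,false)) := Fn_ord w J.
  have -> : ((J,true) : idx r) = flip (J,false) by [].
  by rewrite (GrpS_flip _ wiG) hv_flip -e2 -Fn_ord; move: hlt; lia.
move=> nA.
case: (boolP ((0 < s')%N && (Fn w s'.-1 < 0))).
  case/andP => s0 hlt; have hJ : (s'.-1 < r)%N by lia.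
  set J := Ordinal hJ.
  exists (flP J); split.
    right; exists J; split => // y hy ne.
    have ne' : (y:nat) != (J:nat) := ne.
    have hJs : (J < s')%N by rewrite /= ; lia.
    by move: hy ne'; rewrite hJs /=; lia.
  apply: Dlong => //.
    move=> y hy ne; have ne' : (y:nat) != (J:nat) := ne.
    have hJs : (J < s')%N by rewrite /= ; lia.
    by move: hy ne'; rewrite hJs /=; lia.
  have e2 : Fn w s'.-1 = hv ((w^-1)%g (J,false)) := Fn_ord w J.
  by rewrite -e2.
move=> nB.
case: (boolP (Fn w r.-1 < 0)).
  move=> hlt; have hJ : (r.-1 < r)%N by lia.
  set J := Ordinal hJ.
  have lJ : lastb s' J.
    move=> y hy ne; have ne' : (y:nat) != (J:nat) := ne.
    by have := ltn_ord y; move: ne'; rewrite /=; lia.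
  exists (flP J); split; first by right; exists J.
  apply: Dlong => //.
  have e2 : Fn w r.-1 = hv ((w^-1)%g (J,false)) := Fn_ord w J.
  by rewrite -e2.
move=> nC; exfalso; move/eqP: nw; apply.
have ch : forall n, (n < r)%N -> Fn w n = (r - n)%N%:Z.
  apply: (@chain r s') => //.
  - move=> n hn; set i := Ordinal hn.
    have e : Fn w n = hv ((w^-1)%g (i,false)) := Fn_ord w i.
    exists ((w^-1)%g (i,false)).1; split => //.
      by rewrite (GrpS_blk _ wiG).
    by rewrite e /hv; case: (_.2); [right|left].
  - move=> n hn hb; set i := Ordinal (ltnW hn); set J := Ordinal hn.
    have e1 : Fn w n = hv ((w^-1)%g (i,false)) := Fn_ord w i.
    have e2 : Fn w n.+1 = hv ((w^-1)%g (J,false)) := Fn_ord w J.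
    have ne : Fn w n.+1 != Fn w n.
      rewrite e1 e2; apply/eqP => /hv_inj /perm_inj []; lia.
    move/negP: nA => nA.
    have : ~~ (Fn w n < Fn w n.+1).
      apply/negP => h; apply: nA; apply/existsP; exists i; rewrite /= hn /= hb eqxx /=.
      exact: h.
    by move: ne; lia.
  - move=> s0; have hJ : (s'.-1 < r)%N by lia.
    have e2 : Fn w s'.-1 = hv ((w^-1)%g (Ordinal hJ,false)) := Fn_ord w (Ordinal hJ).
    have := hv_neq0 ((w^-1)%g (Ordinal hJ,false)); rewrite -e2.
    by move: nB; rewrite s0 /=; lia.
  - move=> _; have hJ : (r.-1 < r)%N by lia.
    have e2 : Fn w r.-1 = hv ((w^-1)%g (Ordinal hJ,false)) := Fn_ord w (Ordinal hJ).
    have := hv_neq0 ((w^-1)%g (Ordinal hJ,false)); rewrite -e2.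
    by move: nC; lia.
have wi1 : forall x, (w^-1)%g x = x.
  have h : forall i : 'I_r, (w^-1)%g (i,false) = (i,false).
    move=> i; apply: hv_inj; rewrite -Fn_ord ch //.
  case=> i [] //.
  have -> : ((i,true) : idx r) = flip (i,false) by [].
  by rewrite (GrpS_flip _ wiG) h.
apply/permP => x; rewrite perm1.
by rewrite -{2}(permK w x) wi1.
Qed.


Lemma ffunMzE (f : {ffun 'I_r -> int}) z k : (f *~ k) z = f z * k.
Proof.
case: k => k; first by rewrite /= ffunMnE -mulrzz.
by rewrite /= ffunE ffunMnE -mulrzz.
Qed.

Lemma wtE x z : wt x z = (if x.2 then -1 else 1) * ((z:nat) == x.1)%:Z.
Proof. by rewrite /wt; case: x.2; rewrite !ffunE ?mulN1r ?mul1r. Qed.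

Lemma wt_inj : injective (@wt r).
Proof.
move=> [X b] [Y c] /(congr1 (fun f : weight r => f X)); rewrite !wtE /= eqxx.
case: (@eqP nat X Y) => [E|NE]; last by case: b; case: c.
have -> : Y = X by apply: val_inj.
by case: b; case: c.
Qed.

Ltac natcases :=
  repeat (match goal with |- context[(nat_of_ord ?a == nat_of_ord ?b)] =>
     case: (@eqP nat a b) => ? end; simpl).

Lemma sref_short (I J : 'I_r) x : (J:nat) = (I:nat).+1 ->
  sref (eps r I - eps r I.+1) (wt x) = wt (swf I J x).
Proof.
move=> hJ.
set a := eps r I - eps r I.+1.
have aE : forall z, a z = ((z:nat) == I)%:Z - ((z:nat) == I.+1)%:Z by move=> z; rewrite !ffunE.
have IJ : J != I by apply/eqP => E; move: hJ; rewrite E; lia.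
have dl : forall l : weight r, dotw l a = l I - l J.
  move=> l; rewrite /dotw (bigD1 I) //= (bigD1 J) //= big1 ?addr0.
    rewrite !aE eqxx -hJ eqxx.
    have -> : ((I:nat) == J) = false by apply/eqP; lia.
    have -> : ((J:nat) == I) = false by apply/eqP; lia.
    by rewrite /=; lia.
  move=> j /andP[nI nJ]; rewrite aE.
  have e1 : ((j:nat) == I) = false by apply/negbTE.
  have e2 : ((j:nat) == I.+1) = false by rewrite -hJ; apply/negbTE.
  by rewrite e1 e2 subrr mulr0.
rewrite /sref !dl.
have aI : a I = 1 by rewrite aE eqxx; have -> : ((I:nat) == I.+1) = false by apply/eqP; lia.
have aJ : a J = -1 by rewrite aE -hJ eqxx; have -> : ((J:nat) == I) = false by apply/eqP; lia.
rewrite aI aJ.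
have -> : 1 - (-1) = 2 :> int by [].
rewrite [2 * _]mulrC mulzK //.
apply/ffunP => z; rewrite !ffunE ffunMzE aE !wtE.
case: x => X b.
have s1 : ((swf I J (X,b)).1 : nat) = if (X:nat) == I then (J:nat) else if (X:nat) == J then (I:nat) else X.
  rewrite /swf /=; case: (eqVneq X I) => [->|nI]; first by rewrite !eqxx.
  have -> : ((X:nat) == I) = false by exact/negbTE.
  case: (eqVneq X J) => [->|nJ]; first by rewrite !eqxx.
  by have -> : ((X:nat) == J) = false by exact/negbTE.
rewrite s1 /= -hJ; clear s1.
have := ltn_ord X; have := ltn_ord I; have := ltn_ord J; have := ltn_ord z.
case: b; natcases; rewrite /=; lia.
Qed.

Lemma sref_long (J : 'I_r) x : sref (eps r J *+ 2) (wt x) = wt (flf J x).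
Proof.
set a := eps r J *+ 2.
have aE : forall z, a z = ((z:nat) == J)%:Z *+ 2 by move=> z; rewrite ffunMnE ffunE.
have dl : forall l : weight r, dotw l a = l J * 2.
  move=> l; rewrite /dotw (bigD1 J) //= big1 ?addr0.
    by rewrite aE eqxx.
  move=> j nJ; rewrite aE.
  have e1 : ((j:nat) == J) = false by apply/negbTE.
  by rewrite e1 mul0rn mulr0.
rewrite /sref !dl.
have aJ : a J = 2 by rewrite aE eqxx.
rewrite aJ.
have -> : 2 * (wt x J * 2) = wt x J * (2 * 2) by rewrite mulrC mulrA.
rewrite mulzK //.
apply/ffunP => z; rewrite !ffunE ffunMzE aE !wtE.
case: x => X b.
have fl1 : flf J (X,b) = if (X:nat) == J then (X, ~~b) else (X,b).
  rewrite /flf /flip /=; case: (eqVneq X J) => [->|nJ]; first by rewrite !eqxx.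
  by have -> : ((X:nat) == J) = false by exact/negbTE.
rewrite fl1; clear fl1.
have := ltn_ord X; have := ltn_ord J; have := ltn_ord z.
case: (@eqP nat X J) => e /=; case: b; natcases; rewrite /= ?mulr2n; lia.
Qed.

Lemma refl_unique a (t c : {perm idx r}) : t \in reflset a ->
  (forall x, sref a (wt x) = wt (c x)) -> t = c.
Proof.
rewrite inE => /andP[_ /forallP H] Hc; apply/permP => x; apply: wt_inj.
by rewrite (eqP (H x)) Hc.
Qed.

Lemma GrpS_Weyl s' (w : {perm idx r}) : w \in GrpS s' -> w \in Weyl r.
Proof. by move=> wG; rewrite inE; apply/forallP => x; apply/eqP; exact: (GrpS_flip x wG). Qed.

Lemma Weyl_GrpS0 (w : {perm idx r}) : w \in Weyl r -> w \in GrpS 0.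
Proof.
by rewrite inE => /forallP H; apply/GrpSP; split => x; [apply/eqP; apply: H | rewrite !ltn0].
Qed.

Lemma refl_mem a (c : {perm idx r}) : c \in Weyl r ->
  (forall x, sref a (wt x) = wt (c x)) -> c \in reflset a.
Proof. by move=> cW Hc; rewrite inE cW /=; apply/forallP => x; rewrite Hc. Qed.

Lemma swP_Weyl (I J : 'I_r) : swP I J \in Weyl r.
Proof. by rewrite inE; apply/forallP => x; rewrite !permE. Qed.
Lemma flP_Weyl (J : 'I_r) : flP J \in Weyl r.
Proof.
rewrite inE; apply/forallP => x; rewrite !permE /flf /flip /=.
by case: (eqVneq x.1 J) => //= _; rewrite negbK.
Qed.

Lemma swP_refl (I J : 'I_r) : (J:nat) = (I:nat).+1 -> swP I J \in reflset (eps r I - eps r I.+1).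
Proof. by move=> hJ; apply: refl_mem; [exact: swP_Weyl | move=> x; rewrite (sref_short _ hJ) permE]. Qed.
Lemma flP_refl (J : 'I_r) : flP J \in reflset (eps r J *+ 2).
Proof. by apply: refl_mem; [exact: flP_Weyl | move=> x; rewrite sref_long permE]. Qed.
Lemma refl_short (I J : 'I_r) t : (J:nat) = (I:nat).+1 -> t \in reflset (eps r I - eps r I.+1) -> t = swP I J.
Proof. by move=> hJ tR; apply: refl_unique tR _ => x; rewrite (sref_short _ hJ) permE. Qed.
Lemma refl_long (J : 'I_r) t : t \in reflset (eps r J *+ 2) -> t = flP J.
Proof. by move=> tR; apply: refl_unique tR _ => x; rewrite sref_long permE. Qed.


Section Tau.
Variable s : nat.

Lemma tau_unit (i : 'I_r) : tau s i \is a GRing.unit.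
Proof. by rewrite /tau; case: ifP => _; rewrite ?unitrN1 ?unitr1. Qed.

Lemma chartauD (l m : weight r) : chartau s (l + m) = chartau s l * chartau s m.
Proof.
rewrite /chartau -big_split; apply: eq_bigr => i _; rewrite ffunE exprzDr //.
exact: tau_unit.
Qed.

Lemma chartau0 : chartau s (0 : weight r) = 1.
Proof. by rewrite /chartau big1 // => i _; rewrite ffunE expr0z. Qed.

Lemma chartauN1 (l : weight r) : chartau s l = 1 -> chartau s (- l) = 1.
Proof. by move=> h; have := chartauD l (- l); rewrite addrN chartau0 h mul1r. Qed.

Lemma chartauMn (l : weight r) n : chartau s l = 1 -> chartau s (l *+ n) = 1.
Proof.
move=> h; elim: n => [|n IH]; first by rewrite mulr0n chartau0.
by rewrite mulrS chartauD h IH mulr1.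
Qed.

Lemma chartauMz (l : weight r) k : chartau s l = 1 -> chartau s (l *~ k) = 1.
Proof. by move=> h; case: k => n /=; [exact: chartauMn | apply: chartauN1; exact: chartauMn]. Qed.

Lemma chartau_sref (a l : weight r) : chartau s a = 1 -> chartau s (sref a l) = chartau s l.
Proof. by move=> h; rewrite /sref chartauD chartauN1 ?mulr1 // chartauMz. Qed.

Lemma chartau_eps (I : 'I_r) : chartau s (eps r I) = tau s I.
Proof.
rewrite /chartau (bigD1 I) //= big1 ?mulr1; first by rewrite ffunE eqxx expr1z.
move=> j nj; rewrite ffunE.
by have -> : ((j:nat) == I) = false by exact/negbTE.
Qed.

Lemma chartau_wt x : chartau s (wt x) = tau s x.1.
Proof.
rewrite /wt; case: x.2; last exact: chartau_eps.
have := chartauD (eps r x.1) (- eps r x.1); rewrite addrN chartau0 chartau_eps.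
by rewrite /tau; case: ifP => _ h; lia.
Qed.

Lemma refl_blk a (t : {perm idx r}) x : chartau s a = 1 -> t \in reflset a ->
  ((t x).1 < s)%N = (x.1 < s)%N.
Proof.
move=> ha; rewrite inE => /andP[_ /forallP H].
have := chartau_wt (t x); rewrite (eqP (H x)) chartau_sref // chartau_wt /tau.
by case: ifP; case: ifP.
Qed.

Lemma WM_GrpS : (WM r s \subset GrpS s).
Proof.
rewrite /WM (gen_subG _ (GrpS_group s)); apply/bigcupsP => p /andP[_ /eqP hc].
apply/subsetP => t tR; apply/GrpSP; split => x; last exact: refl_blk hc tR.
by move: tR; rewrite inE => /andP[]; rewrite inE => /forallP /(_ x) /eqP.
Qed.

End Tau.


Lemma flP_GrpS s' (J : 'I_r) : flP J \in GrpS s'.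
Proof.
apply/GrpSP; split => x; first by move: (flP_Weyl J); rewrite inE => /forallP /(_ x) /eqP.
by rewrite permE /flf; case: ifP.
Qed.

Lemma alpha_short i : (i.+1 < r)%N -> alpha r i = eps r i - eps r i.+1.
Proof. by move=> h; rewrite /alpha h. Qed.
Lemma alpha_long i : ~~ (i.+1 < r)%N -> alpha r i = eps r i *+ 2.
Proof. by move=> h; rewrite /alpha (negbTE h). Qed.

Section Par.
Variable k : nat.

Definition Good : {set {perm idx r}} :=
  [set w in GrpS k | [forall x : idx r, (x.1 < k)%N ==> ((w x).2 == x.2)]].

Lemma GoodP (w : {perm idx r}) : reflect (w \in GrpS k /\ forall x : idx r, (x.1 < k)%N -> (w x).2 = x.2) (w \in Good).
Proof.
apply: (iffP setIdP) => [[h1 /forallP h2]|[h1 h2]]; split => //.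
  by move=> x hx; move: (h2 x); rewrite hx => /eqP.
by apply/forallP => x; apply/implyP => hx; rewrite h2.
Qed.

Lemma Good_group_set : group_set Good.
Proof.
apply/group_setP; split; first by apply/GoodP; split; [exact: group1 | move=> x _; rewrite perm1].
move=> u v /GoodP[uG u2] /GoodP[vG v2]; apply/GoodP; split.
  by rewrite (groupM (G := GrpS_group k)).
by move=> x hx; rewrite permM v2 ?u2 // (GrpS_blk x uG).
Qed.
Canonical Good_group := Group Good_group_set.

Lemma WP_Good : (k < r)%N -> WP r k \subset Good.
Proof.
move=> kr; rewrite /WP (gen_subG _ Good_group); apply/bigcupsP => i hik; apply/subsetP => t tR.
case: (ltnP i.+1 r) => hi.
  set J := Ordinal hi.
  rewrite alpha_short // in tR.
  have -> := @refl_short i J t erefl tR.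
  apply/GoodP; split; last by move=> x _; rewrite permE.
  apply: simp_grp; left; exists i, J; split => //=.
  by move: hik; lia.
rewrite alpha_long -?ltnNge // in tR.
have -> := refl_long tR.
apply/GoodP; split; first exact: flP_GrpS.
move=> x hx; rewrite permE /flf.
by have -> : (x.1 == i) = false by apply/negbTE; apply/eqP => E; move: hx hi; rewrite E; lia.
Qed.

Lemma flP_WP (J : 'I_r) : (k <= J)%N -> flP J \in WP r k.
Proof.
have main : forall n (J : 'I_r), (J + n)%N = r.-1 -> (k <= J)%N -> flP J \in WP r k.
  elim=> [|n IH] J0 hJ hk.
    apply: mem_gen; apply/bigcupP; exists J0; first by apply/eqP; move: hJ hk; have := ltn_ord J0; lia.
    by rewrite alpha_long; [exact: flP_refl | move: hJ; have := ltn_ord J0; lia].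
  have hi : (J0.+1 < r)%N by move: hJ; have := ltn_ord J0; lia.
  set J1 := Ordinal hi.
  have h1 : flP J1 \in WP r k by apply: IH => /=; lia.
  have h2 : swP J0 J1 \in WP r k.
    apply: mem_gen; apply/bigcupP; exists J0; first by apply/eqP; lia.
    by rewrite alpha_short //; apply: swP_refl.
  have -> : flP J0 = (swP J0 J1 * flP J1 * swP J0 J1)%g.
    have n01 : (J1 == J0) = false by apply/eqP => /(congr1 val) /=; lia.
    have n10 : (J0 == J1) = false by rewrite eq_sym.
    apply/permP => [[X b]]; rewrite !permM !permE /swf /flf /flip /=.
    case: (eqVneq X J0) => [->|nX0]; first by rewrite !eqxx /= n01.
    case: (eqVneq X J1) => [->|nX1]; first by rewrite n10 /= eqxx.
    by rewrite (negbTE nX1) /= (negbTE nX0) (negbTE nX1).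
  by rewrite !groupM.
by move=> hk; apply: (main (r.-1 - J)%N) => //; have := ltn_ord J; lia.
Qed.

End Par.


Lemma in_bigcup_seq (I : eqType) (l : seq I) (F : I -> {set {perm idx r}}) (x : {perm idx r}) :
  (x \in \bigcup_(i <- l) F i) = has (fun i => x \in F i) l.
Proof. by elim: l => [|a l IH]; rewrite ?big_nil ?big_cons ?inE ?IH. Qed.

Lemma mid_eq s : (0 < s < r)%N ->
  (\sum_(s.-1 <= i < r.-1) alpha r i) *+ 2 + alpha r r.-1 = eps r s.-1 *+ 2.
Proof.
move=> hs.
rewrite (@telescope_sumr_eq _ _ _ (fun i => - eps r i)); last first.
  by move=> i hi; rewrite alpha_short ?opprK 1?addrC //; lia.
  lia.
rewrite alpha_long; last lia.
by rewrite opprK -mulrnDl [X in X *+ 2]addrC ?addNKr ?addKr.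
Qed.

Lemma Ssimple_simp c : c \in Ssimple r -> simp 0 c.
Proof.
case/bigcupP => i _ tR; case: (ltnP i.+1 r) => hi.
  set J := Ordinal hi; rewrite alpha_short // in tR.
  by left; exists i, J; split; [done | rewrite !ltn0 | exact: (@refl_short i J c erefl tR)].
rewrite alpha_long -?ltnNge // in tR.
right; exists i; split; last exact: refl_long tR.
move=> y _ ne; have ne' : (y:nat) != (i:nat) := ne; have := ltn_ord y; move: ne'; lia.
Qed.

Lemma simp_Ssimple c : simp 0 c -> c \in Ssimple r.
Proof.
case=> [[I [J [hJ hb ->]]]|[J [hl ->]]].
  apply/bigcupP; exists I => //.
  by rewrite alpha_short ?swP_refl //; rewrite -hJ.
have hJ : ~~ (J.+1 < r)%N.
  apply/negP => h; have ne : Ordinal h != J by apply/eqP => /(congr1 val) /=; lia.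
  by have := hl (Ordinal h) ltac:(by rewrite !ltn0) ne; rewrite /=; lia.
apply/bigcupP; exists J => //.
by rewrite alpha_long // flP_refl.
Qed.


Lemma SM_simp s c : (0 < s < r)%N -> c \in SM r s -> simp s c.
Proof.
move=> hs; rewrite /SM in_bigcup_seq => /hasP[b bM cR].
rewrite /msimple !mem_cat in bM.
case/orP: bM => [/mapP[i hi eb]|/orP[]].
- rewrite eb mem_iota in cR hi.
  have hi1 : (i < r)%N by lia. have hi2 : (i.+1 < r)%N by lia.
  rewrite alpha_short // in cR.
  left; exists (Ordinal hi1), (Ordinal hi2); split => //=; first by lia.
  exact: (@refl_short (Ordinal hi1) (Ordinal hi2) c erefl cR).
- rewrite inE => /eqP eb; rewrite eb mid_eq // in cR.
  have hJ : (s.-1 < r)%N by lia.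
  right; exists (Ordinal hJ); split; last exact: (@refl_long (Ordinal hJ) c cR).
  move=> y /= hy ne; have ne' : (y:nat) != s.-1 := ne.
  have : (s.-1 < s)%N by lia.
  by move=> h; move: hy; rewrite h; move: ne'; lia.
- move=> /mapP[i hi eb]; rewrite eb in cR; rewrite mem_iota in hi.
  have hi1 : (i < r)%N by lia.
  case: (ltnP i.+1 r) => hi2.
    rewrite alpha_short // in cR.
    left; exists (Ordinal hi1), (Ordinal hi2); split => //=; first by lia.
    exact: (@refl_short (Ordinal hi1) (Ordinal hi2) c erefl cR).
  rewrite alpha_long -?ltnNge // in cR.
  right; exists (Ordinal hi1); split; last exact: (@refl_long (Ordinal hi1) c cR).
  move=> y /= hy ne; have ne' : (y:nat) != i := ne.
  by have := ltn_ord y; move: ne'; lia.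
Qed.

Lemma simp_SM s c : (0 < s < r)%N -> simp s c -> c \in SM r s.
Proof.
move=> hs; rewrite /SM in_bigcup_seq; case=> [[I [J [hJ hb ->]]]|[J [hl ->]]]; apply/hasP.
  exists (alpha r I); last by rewrite alpha_short ?swP_refl // -hJ.
  rewrite /msimple !mem_cat; case: (ltnP J s) => hJs.
    by apply/orP; left; apply/mapP; exists (I:nat) => //; rewrite mem_iota; lia.
  apply/orP; right; apply/orP; right; apply/mapP; exists (I:nat) => //; rewrite mem_iota.
  move: hb; have := ltn_ord J; lia.
case: (ltnP J s) => hJs.
  have e : (J:nat) = s.-1.
    have h1 : (s.-1 < r)%N by lia.
    case: (eqVneq (J:nat) s.-1) => // ne.
    have ne' : Ordinal h1 != J by apply/eqP => /(congr1 val) /= E; move: ne; rewrite E eqxx.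
    have := hl (Ordinal h1); rewrite /= hJs => /(_ ltac:(lia) ne'); lia.
  exists ((\sum_(s.-1 <= i < r.-1) alpha r i) *+ 2 + alpha r r.-1).
    by rewrite /msimple !mem_cat inE eqxx orbT.
  by rewrite mid_eq // -e flP_refl.
have e : (J:nat) = r.-1.
  have h1 : (r.-1 < r)%N by lia.
  case: (eqVneq (J:nat) r.-1) => // ne.
  have ne' : Ordinal h1 != J by apply/eqP => /(congr1 val) /= E; move: ne; rewrite E eqxx.
  have := hl (Ordinal h1); rewrite /=.
  have -> : (r.-1 < s)%N = false by lia.
  have -> : (J < s)%N = false by lia.
  by move=> /(_ erefl ne'); have := ltn_ord J; lia.
exists (alpha r J).
  rewrite /msimple !mem_cat; apply/orP; right; apply/orP; right; apply/mapP; exists (J:nat) => //.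
  by rewrite mem_iota; lia.
by rewrite alpha_long ?flP_refl // e; lia.
Qed.


Lemma hvFn s' (w : {perm idx r}) (X : 'I_r) b : w \in GrpS s' ->
  hv ((w^-1)%g (X,b)) = if b then - Fn w X else Fn w X.
Proof.
move=> wG; have wiG := GrpS_V wG; rewrite Fn_ord; case: b => //.
have -> : ((X,true) : idx r) = flip (X,false) by [].
by rewrite (GrpS_flip _ wiG) hv_flip.
Qed.

Lemma Fn_bound s' (w : {perm idx r}) : w \in GrpS s' -> forall n, (n < r)%N ->
  exists j, [/\ (j < r)%N, (j < s')%N = (n < s')%N &
     (Fn w n = (r - j)%N%:Z \/ Fn w n = - (r - j)%N%:Z)].
Proof.
move=> wG n hn; have wiG := GrpS_V wG; set i := Ordinal hn.
have e : Fn w n = hv ((w^-1)%g (i,false)) := Fn_ord w i.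
exists ((w^-1)%g (i,false)).1; split => //; first by rewrite (GrpS_blk _ wiG).
by rewrite e /hv; case: (_.2); [right|left].
Qed.

End Basics.

Lemma dec_range (p q : nat) (F : nat -> int) :
  (forall i, (p <= i)%N -> (i.+1 < q)%N -> F i.+1 < F i) ->
  forall i j, (p <= i)%N -> (i < j)%N -> (j < q)%N -> F j < F i.
Proof.
move=> h i j hi; elim: j => [//|j IH] hij hj.
case: (eqVneq i j) => [E|ne]; first by rewrite E; apply: h; lia.
have := h j ltac:(lia) hj; have := IH ltac:(lia) ltac:(lia); lia.
Qed.

Lemma final_arith (r s k : nat) (F : nat -> int) : (1 <= k)%N -> (k <= s)%N -> (s < r)%N ->
  (forall n, (n < r)%N -> exists j, [/\ (j < r)%N, (j < s)%N = (n < s)%N &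
       (F n = (r - j)%N%:Z \/ F n = - (r - j)%N%:Z)]) ->
  (forall i, (i.+1 < r)%N -> (i < s)%N = (i.+1 < s)%N -> i.+1 != k -> F i.+1 < F i) ->
  ((k < s)%N -> 0 < F s.-1) -> 0 < F r.-1 ->
  [/\ (forall i j, (i < j)%N -> (j < k)%N -> F j < F i),
      (forall i j, (k <= i)%N -> (i < j)%N -> (j < r)%N -> F j < F i) &
      (forall i, (k <= i)%N -> (i < r)%N -> 0 < F i)].
Proof.
move=> k1 ks sr bd QS Q3 Q5.
have D1 : forall i j, (i < j)%N -> (j < k)%N -> F j < F i.
  move=> i j ij jk; apply: (@dec_range 0 k) => //.
  by move=> m _ hm; apply: QS; lia.
have Ra : forall i j, (k <= i)%N -> (i < j)%N -> (j < s)%N -> F j < F i.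
  move=> i j ki ij js; apply: (@dec_range k s) => //.
  by move=> m hm1 hm; apply: QS; lia.
have Rb : forall i j, (s <= i)%N -> (i < j)%N -> (j < r)%N -> F j < F i.
  move=> i j ki ij js; apply: (@dec_range s r) => //.
  by move=> m hm1 hm; apply: QS; lia.
have D3 : forall i, (k <= i)%N -> (i < r)%N -> 0 < F i.
  move=> i ki ir; case: (ltnP i s) => his.
    have h := Q3 ltac:(lia).
    case: (eqVneq i s.-1) => [->//|ne].
    have := Ra i s.-1 ki ltac:(lia) ltac:(lia); lia.
  case: (eqVneq i r.-1) => [->//|ne].
  have := Rb i r.-1 his ltac:(lia) ltac:(lia); lia.
split => // i j ki ij jr.
case: (ltnP j s) => hjs; first exact: Ra.
case: (ltnP i s) => his; last exact: Rb.
have [a [ha ea fa]] := bd i ltac:(lia).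
have [b [hb eb fb]] := bd j jr.
have pi := D3 i ki ltac:(lia).
move: ea eb; rewrite his; have -> : (j < s)%N = false by lia.
move=> ea eb; lia.
Qed.

Section Final.
Variables r s k : nat.
Hypotheses (k1 : (1 <= k)%N) (ks : (k <= s)%N) (sr : (s < r)%N).

Lemma hs : (0 < s < r)%N.
Proof. by apply/andP; split; lia. Qed.

Lemma Mcontra (w c : {perm idx r}) : w \in GrpS r s -> minrep (SM r s) (WQ r s k) w ->
  c \in WQ r s k -> c \in GrpS r s -> Dw s w = (Dw s (w * c)%g).+2 -> False.
Proof.
move=> wG wmin cQ cG eD.
have F1M := @F1 r s (SM r s) (fun c h => SM_simp hs h).
have F2M := @F2 r s (SM r s) (fun c h => simp_SM hs h)
  (fun w wG nw => @descent r s w (ltnW sr) wG nw).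
have vG : (w * c)%g \in GrpS r s by rewrite (groupM (G := GrpS_group r s)).
have [mv [ev wv]] := F2M (Dw s (w * c)%g) (w * c)%g (leqnn _) vG.
have vin : (w * c)%g \in (w *: WQ r s k)%g by rewrite mem_lcoset mulKg.
have [m' hm' [t [tS st pt]]] := wmin _ vin mv wv.
have [_] := F1M t tS; rewrite pt st; lia.
Qed.

Lemma swP_WM (I J : 'I_r) : (J:nat) = (I:nat).+1 -> ((I < s) = (J < s))%N -> swP I J \in WM r s.
Proof.
move=> hJ hb; apply: mem_gen; apply/bigcupP; exists (I, J, false, true).
  rewrite /rootParam /=; apply/andP; split.
    by apply/implyP => E; move: hJ; rewrite (eqP E); lia.
  apply/eqP; rewrite /rootOf /= chartauD chartau_eps.
  have -> : - eps r J = wt ((J,true) : idx r) by [].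
  by rewrite chartau_wt /= /tau -hb; case: ifP.
by rewrite /rootOf /= hJ; apply: swP_refl.
Qed.

Lemma flP_WM (J : 'I_r) : flP J \in WM r s.
Proof.
apply: mem_gen; apply/bigcupP; exists (J, J, false, false).
  rewrite /rootParam /= eqxx /=; apply/eqP; rewrite /rootOf /= chartauD chartau_eps /tau.
  by case: ifP.
by rewrite /rootOf /= -mulr2n; apply: flP_refl.
Qed.

Lemma swP_WP (I J : 'I_r) : (J:nat) = (I:nat).+1 -> (I.+1 != k)%N -> swP I J \in WP r k.
Proof.
move=> hJ hk; apply: mem_gen; apply/bigcupP; exists I => //.
rewrite alpha_short; first exact: swP_refl.
by rewrite -hJ.
Qed.

Lemma mainG (w : {perm idx r}) : w \in GrpS r s -> minrep (SM r s) (WQ r s k) w ->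
  in_WP_min k w.
Proof.
move=> wG wmin; have wiG := GrpS_V wG.
set F := Fn w.
have QS : forall i, (i.+1 < r)%N -> (i < s)%N = (i.+1 < s)%N -> i.+1 != k -> F i.+1 < F i.
  move=> i hi hb hk; have hi0 : (i < r)%N by lia.
  set I := Ordinal hi0; set J := Ordinal hi.
  have cQ : swP I J \in WQ r s k by rewrite inE swP_WM // swP_WP.
  have cG : swP I J \in GrpS r s by apply: simp_grp; left; exists I, J.
  have ne : F i.+1 != F i.
    rewrite /F (Fn_ord w I) (Fn_ord w J); apply/eqP => /hv_inj /perm_inj [] /=; lia.
  have : ~~ (hv ((w^-1)%g (I,false)) + hv ((w^-1)%g (J,true)) < 0).
    by apply/negP => h; apply: (Mcontra wG wmin cQ cG); apply: Dshort.
  rewrite (hvFn _ _ wG) (hvFn _ _ wG).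
  by move: ne; rewrite /F /I /J /=; lia.
have QL : forall (J : 'I_r), lastb s J -> (k <= J)%N -> 0 < F J.
  move=> J hl hk.
  have cQ : flP J \in WQ r s k by rewrite inE flP_WM flP_WP.
  have cG : flP J \in GrpS r s by apply: flP_GrpS.
  have ne := hv_neq0 ((w^-1)%g (J,false)).
  have : ~~ (hv ((w^-1)%g (J,false)) < 0).
    by apply/negP => h; apply: (Mcontra wG wmin cQ cG); apply: Dlong.
  by rewrite /F (Fn_ord w J); move: ne; lia.
have Q3 : (k < s)%N -> 0 < F s.-1.
  move=> hk; have h1 : (s.-1 < r)%N by lia.
  have := QL (Ordinal h1); rewrite /=; apply; last by lia.
  move=> y /= hy ne; have ne' : (y:nat) != s.-1 := ne.
  have : (s.-1 < s)%N by lia.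
  by move=> h; move: hy; rewrite h; move: ne'; lia.
have Q5 : 0 < F r.-1.
  have h1 : (r.-1 < r)%N by lia.
  have := QL (Ordinal h1); rewrite /=; apply; last by lia.
  move=> y /= hy ne; have ne' : (y:nat) != r.-1 := ne.
  by have := ltn_ord y; move: ne'; lia.
have [D1 D2 D3] := final_arith k1 ks sr (Fn_bound wG) QS Q3 Q5.
have key : forall (g : {perm idx r}) x y, g \in Good r k -> 0 < hv x + hv y ->
    hv (w x) + hv (w y) < 0 -> hv (g (w x)) + hv (g (w y)) < 0.
  move=> g x y /GoodP[gG g2].
  have ex : hv x = hv ((w^-1)%g (w x)) by rewrite permK.
  have ey : hv y = hv ((w^-1)%g (w y)) by rewrite permK.
  rewrite ex ey; clear ex ey.
  move: (g2 (w x)) (g2 (w y)) (GrpS_blk (w x) gG) (GrpS_blk (w y) gG).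
  case: (w x) => X b; case: (w y) => Y c.
  rewrite !(hvFn _ _ wG) /=.
  case: (g (X,b)) => X' b'; case: (g (Y,c)) => Y' c' /=.
  move=> gb gc bX bY h1 h2.
  have hX := ltn_ord X; have hY := ltn_ord Y; have hX' := ltn_ord X'; have hY' := ltn_ord Y'.
  move: h1 h2; rewrite /hv /= /F.
  case: (ltnP X k) => hXk; case: (ltnP Y k) => hYk.
  - have eb := gb hXk; have ec := gc hYk; subst b' c'.
    have hX'k : (X' < k)%N by rewrite bX. have hY'k : (Y' < k)%N by rewrite bY.
    have d1 := D1 X Y; have d2 := D1 Y X; clear gb gc bX bY.
    by case: b; case: c => /=; lia.
  - have eb := gb hXk; subst b'.
    have hX'k : (X' < k)%N by rewrite bX. have hY'k : (k <= Y')%N by rewrite leqNgt bY -leqNgt.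
    clear gb gc bX bY.
    by case: b; case: c; case: c' => /=; lia.
  - have ec := gc hYk; subst c'.
    have hY'k : (Y' < k)%N by rewrite bY. have hX'k : (k <= X')%N by rewrite leqNgt bX -leqNgt.
    clear gb gc bX bY.
    by case: b; case: c; case: b' => /=; lia.
  - have d1 := D2 X Y hXk; have d2 := D2 Y X hYk; have d3 := D3 X hXk hX; have d4 := D3 Y hYk hY; clear gb gc bX bY.
    by case: b; case: c => /=; lia.
have kr : (k < r)%N by lia.
split; first exact: GrpS_Weyl wG.
move=> v vin n [t [tS st pt]].
set g := ((w^-1) * v)%g.
have gP : g \in WP r k by rewrite /g -mem_lcoset.
have gG : g \in Good r k := subsetP (WP_Good kr) _ gP.
have ev : v = (w * g)%g by rewrite /g mulKVg.
clearbody g.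
have [_ hD] := @F1 r 0 (Ssimple r) (fun c h => Ssimple_simp h) t tS.
rewrite pt st in hD.
have hc : (Dw 0 w <= Dw 0 v)%N.
  rewrite ev; apply: leq_add; apply: subset_leq_card; apply/subsetP.
    move=> [x y]; rewrite !inE /= !permM => /andP[h1 h2].
    by rewrite h1 /=; apply: key.
  move=> x; rewrite !inE permM => /andP[h1 h2]; rewrite h1 /=.
  have := key g x x gG; move: h1 h2; lia.
have w0 : w \in GrpS r 0 := Weyl_GrpS0 (GrpS_Weyl wG).
have [m [em wm]] := @F2 r 0 (Ssimple r) (fun c h => simp_Ssimple h)
  (fun w wG nw => @descent r 0 w (leq0n r) wG nw) _ w (leqnn _) w0.
exists m => //; lia.
Qed.

End Final.

Unset Implicit Arguments.
Local Close Scope ring_scope.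

Theorem mainTheorem5 (r s k : nat) :
  (1 <= k)%N -> (k <= s)%N -> (s < r)%N ->
  forall w : {perm idx r}, @in_WMQ_min r s k w -> @in_WP_min r k w.
Proof.
move=> k1 ks sr w [wM wmin].
apply: (mainG k1 ks sr) => //.
exact: (subsetP (WM_GrpS r s)).
Qed.
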